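(* Let $\mathbf{F}$ be a field of characteristic $2$, $m\ge1$, and let $A\in\{0,1\}^m$ with $|A|\ge 3$. Then $$\sum_{0<L<A} x^{A-L}\,\mathrm{Tr}(L)\in\ker(\pi).$$ Moreover, let $i=\ell(A)$ and $j=\ell(A')$. Then for every $L$ with $0<L<A$, $$\mathrm{LT}\big(\pi(x^{A-L}\mathrm{Tr}(L))\big)\le x_i x_j\, y^{(A')'}$$ (in the graded reverse lexicographic order with $y_1>x_1>y_2>x_2>\cdots>y_m>x_m$), with equality if and only if $A-L=\Delta_i$ or $A-L=\Delta_j$.
   Context: Let $S=\mathbf{F}[x_1,y_1,\dots,x_m,y_m]$ with the $\mathbf{F}$-algebra automorphism $\sigma(x_i)=x_i$, $\sigma(y_i)=y_i+x_i$ of order 2, and let $S^{C_2}$ be the ring of $\sigma$-invariants. For $A=(a_1,\dots,a_m)\in\mathbb{N}^m$ write $x^A=\prod_s x_s^{a_s}$, $y^A=\prod_s y_s^{a_s}$, $N^A=\prod_s N_s^{a_s}$ where $N_s=y_s^2+x_sy_s$, and $|A|=\sum_s a_s$. $A\le B$ means componentwise $\le$; $L<A$ means $L\le A$, $L\ne A$. $\Delta_s$ is the sequence with $1$ in position $s$ and $0$ elsewhere. For $A\in\{0,1\}^m$, $\mathrm{tr}(A)=y^A+\prod_s(y_s+x_s)^{a_s}\in S^{C_2}$. For $A\ne0$, $\ell(A)=\min\{\ell:a_\ell=1\}$ and $A'$ is $A$ with the entry at position $\ell(A)$ set to $0$. Let $R=\mathbf{F}[x_1,\dots,x_m,N_1,\dots,N_m]$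 be a polynomial ring in $2m$ indeterminates and $Q=R[\mathrm{Tr}(A): A\in\{0,1\}^m, |A|\ge2]$ a polynomial ring over $R$ in the indeterminates $\mathrm{Tr}(A)$. Let $\pi:Q\to S^{C_2}$ be the $\mathbf{F}$-algebra homomorphism with $\pi(x_i)=x_i$, $\pi(N_i)=y_i^2+x_iy_i$, $\pi(\mathrm{Tr}(A))=\mathrm{tr}(A)$. Convention: for $C\in\{0,1\}^m$ with $|C|\le 1$, $\mathrm{Tr}(C)$ denotes the element of $Q$ given by $\mathrm{Tr}(0)=0$ and $\mathrm{Tr}(\Delta_s)=x_s$ (so that $\pi(\mathrm{Tr}(C))=\mathrm{tr}(C)$ for all $C\in\{0,1\}^m$). $\mathrm{LT}$ denotes the lead term. *)

(* Defs.v *)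
From HB Require Import structures.
From mathcomp Require Import all_boot all_order all_algebra.
From mathcomp Require Import mpoly.
Set Implicit Arguments. Unset Strict Implicit. Unset Printing Implicit Defensive.
Import Order.TTheory GRing.Theory.
Local Open Scope ring_scope.

Section Defs.
Variables (F : fieldType) (m : nat).

(* Elements of {0,1}^m are represented by subsets of 'I_m (their supports).
   |A| = #|A|, A <= B is A \subset B, x^A, y^A are products over A. *)

(* S = F[x_1,y_1,...,x_m,y_m]: variables indexed by 'I_(m + m);
   x_s = 'X_(lshift m s), y_s = 'X_(rshift m s). *)
Definition Svar := 'I_(m + m).
Definition S := {mpoly F[m + m]}.
Definition xv (s : 'I_m) : Svar := lshift m s.
Definition yv (s : 'I_m) : Svar := rshift m s.
Definition Sx (s : 'I_m) : S := 'X_(xv s).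
Definition Sy (s : 'I_m) : S := 'X_(yv s).

Definition tr (A : {set 'I_m}) : S :=
  \prod_(s in A) Sy s + \prod_(s in A) (Sy s + Sx s).

(* Q = F[x_1..x_m, N_1..N_m][Tr(A) : |A| >= 2]: variables indexed by
   'I_(m + m + #|TrIdx|): x_s = lshift, N_s = lshift (rshift), and Tr(B)
   for B in TrIdx is rshift (m+m) j where enum_val j = B. *)
Definition TrIdx : {set {set 'I_m}} := [set B : {set 'I_m} | 2 <= #|B|]%N.
Definition Qn := (m + m + #|TrIdx|)%N.
Definition Q := {mpoly F[Qn]}.
Definition Qx (s : 'I_m) : Q := 'X_(lshift #|TrIdx| (lshift m s)).
Definition QN (s : 'I_m) : Q := 'X_(lshift #|TrIdx| (rshift m s)).
Definition QTrVar (j : 'I_#|TrIdx|) : Q := 'X_(rshift (m + m) j).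

(* Tr(C) in Q, for every C in {0,1}^m, with the convention Tr(0) = 0 and
   Tr(Delta_s) = x_s. *)
Definition QTr (C : {set 'I_m}) : Q :=
  if (#|C| <= 1)%N then
    (if [pick s in C] is Some s then Qx s else 0)
  else
    (if [pick j : 'I_#|TrIdx| | enum_val j == C] is Some j then QTrVar j else 0).

Definition Qxpow (A : {set 'I_m}) : Q := \prod_(s in A) Qx s.
Definition Sxpow (A : {set 'I_m}) : S := \prod_(s in A) Sx s.

Definition pi_img (v : 'I_Qn) : S :=
  match split v with
  | inl w => match split w with
             | inl s => Sx s
             | inr s => Sy s ^+ 2 + Sx s * Sy s
             end
  | inr j => tr (enum_val j)
  end.
Definition piQ (p : Q) : S := mmap (@mpolyC _ F) pi_img p.

(* is_ell A i : i = ell(A) = min{l : a_l = 1}; then A' = A :\ i. *)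
Definition is_ell (A : {set 'I_m}) (i : 'I_m) : bool :=
  (i \in A) && [forall k in A, (i <= k)%N].

(* Graded reverse lexicographic order with y_1 > x_1 > y_2 > x_2 > ... .
   rank: y_s has rank 2s, x_s has rank 2s+1; higher rank = smaller variable. *)
Definition vrank (v : Svar) : nat :=
  match split v with inl s => (2 * s).+1 | inr s => 2 * s end.

Definition grevlex_lt (a b : 'X_{1..m + m}) : bool :=
  (mdeg a < mdeg b)%N ||
  ((mdeg a == mdeg b) &&
   [exists k : Svar, (b k < a k)%N &&
      [forall k' : Svar, (vrank k < vrank k')%N ==> (a k' == b k')]]).
Definition grevlex_le (a b : 'X_{1..m + m}) : bool := (a == b) || grevlex_lt a b.

Definition lead_mono (p : S) : 'X_{1..m + m} :=
  foldr (fun a b => if grevlex_lt b a then a else b) 0%MM (msupp p).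
Definition lead_term (p : S) : S := p@_(lead_mono p) *: 'X_[lead_mono p].

Definition xxy (i j : 'I_m) (B : {set 'I_m}) : 'X_{1..m + m} :=
  (U_(xv i) + U_(xv j) + \sum_(s in B) U_(yv s))%MM.

End Defs.

Arguments Sx {F m}. Arguments Sy {F m}. Arguments tr {F m}.
Arguments Qx {F m}. Arguments QN {F m}. Arguments QTrVar {F m}.
Arguments QTr {F m}. Arguments Qxpow {F m}. Arguments Sxpow {F m}.
Arguments piQ {F m}. Arguments pi_img {F m}.
Arguments lead_mono {F m}. Arguments lead_term {F m}.

(* Main.v *)
Require Import Defs.
From HB Require Import structures.
From mathcomp Require Import all_boot all_order all_algebra.
From mathcomp Require Import mpoly.
Set Implicit Arguments. Unset Strict Implicit. Unset Printing Implicit Defensive.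
Import Order.TTheory GRing.Theory.
Local Open Scope ring_scope.

Lemma splitL a b (i : 'I_a) : split (lshift b i) = inl i.
Proof. exact: (unsplitK (inl i)). Qed.
Lemma splitR a b (i : 'I_b) : split (rshift a i) = inr i.
Proof. exact: (unsplitK (inr i)). Qed.

Section S1.
Variables (F : fieldType) (m : nat).
Hypothesis ch2 : (2 \in [pchar F])%N.

Lemma piQM (p q : Q F m) : piQ (p * q) = piQ p * piQ q.
Proof. by rewrite /piQ rmorphM. Qed.
Lemma piQ_sum I (r : seq I) (P : pred I) (f : I -> Q F m) :
  piQ (\sum_(i <- r | P i) f i) = \sum_(i <- r | P i) piQ (f i).
Proof. by rewrite /piQ rmorph_sum. Qed.
Lemma piQ_prod I (r : seq I) (P : pred I) (f : I -> Q F m) :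
  piQ (\prod_(i <- r | P i) f i) = \prod_(i <- r | P i) piQ (f i).
Proof. by rewrite /piQ rmorph_prod. Qed.
Lemma piQ0 : piQ (0 : Q F m) = 0. Proof. by rewrite /piQ rmorph0. Qed.
Lemma piQX (v : 'I_(Qn m)) : piQ ('X_v : Q F m) = pi_img v.
Proof. by rewrite /piQ mmapX mmap1U. Qed.
Lemma piQx s : piQ (Qx s : Q F m) = Sx s.
Proof. by rewrite /Qx piQX /pi_img !splitL. Qed.
Lemma piQTrVar j : piQ (QTrVar j : Q F m) = tr (enum_val j).
Proof. by rewrite /QTrVar piQX /pi_img splitR. Qed.

Lemma two0 (a : S F m) : a + a = 0.
Proof.
have h2 : (2%:R : F) = 0 by apply/eqP; case/andP: ch2.
by rewrite -mulr2n -mulr_natr -(rmorph_nat (@mpolyC (m+m) F)) h2 raddf0 mulr0.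
Qed.
End S1.

Section S2.
Variables (F : fieldType) (m : nat).
Hypothesis ch2 : (2 \in [pchar F])%N.

Lemma piQTr (L : {set 'I_m}) : piQ (QTr L : Q F m) = tr L.
Proof.
rewrite /QTr; case: ifP => hL.
  case: pickP => [s sL|nL].
    have -> : L = [set s].
      apply/eqP; rewrite eq_sym eqEcard sub1set sL cards1 /=.
      by [].
    by rewrite piQx /tr !big_set1 addrA two0 // add0r.
  have -> : L = set0 by apply/setP => s; rewrite inE nL.
  by rewrite piQ0 /tr !big_set0 two0.
case: pickP => [j /eqP <-|nj]; first by rewrite piQTrVar.
have LT : L \in TrIdx m by rewrite inE leqNgt ltnS hL.
by have := nj (enum_rank_in LT L); rewrite enum_rankK_in ?eqxx.
Qed.
End S2.

Lemma prod_expand (R : comRingType) (I : finType) (A : {set I}) (a b : I -> R) :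
  \prod_(i in A) (a i + b i) =
  \sum_(J : {set I} | J \subset A) (\prod_(i in J) a i * \prod_(i in A :\: J) b i).
Proof.
pose f i := if i \in A then a i else 0.
pose g i := if i \in A then b i else 1.
rewrite big_mkcond /=.
rewrite (eq_bigr (fun i => f i + g i)); last first.
  by move=> i _; rewrite /f /g; case: (i \in A); rewrite ?add0r.
rewrite bigA_distr [RHS]big_mkcond /=; apply: eq_bigr => J _.
case: ifP => JA.
  rewrite [\prod_(i in J) _]big_mkcond [\prod_(i in A :\: J) _]big_mkcond /=.
  rewrite -big_split /=; apply: eq_bigr => i _.
  rewrite /f /g inE; case iJ: (i \in J) => /=.
    by rewrite (subsetP JA _ iJ) mulr1.
  by case: (i \in A); rewrite mul1r.
have /subsetPn [i iJ iA] := negbT JA.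
by rewrite (bigD1 i) //= iJ /f (negbTE iA) mul0r.
Qed.

Section S4.
Variables (F : fieldType) (m : nat).
Hypothesis ch2 : (2 \in [pchar F])%N.

Lemma piQxpow A : piQ (Qxpow A : Q F m) = Sxpow A.
Proof. by rewrite /Qxpow piQ_prod; apply: eq_bigr => s _; rewrite piQx. Qed.

Lemma tr0 : tr (set0 : {set 'I_m}) = 0 :> S F m.
Proof. by rewrite /tr !big_set0 two0. Qed.

Lemma full_sum (A : {set 'I_m}) :
  \sum_(L : {set 'I_m} | L \subset A) Sxpow (A :\: L) * tr L = tr A :> S F m.
Proof.
rewrite /tr.
rewrite (eq_bigr (fun L : {set 'I_m} => Sxpow (A :\: L) * \prod_(s in L) Sy s
   + Sxpow (A :\: L) * \prod_(s in L) (Sy s + Sx s) : S F m)); last first.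
  by move=> L _; rewrite mulrDr.
rewrite big_split /=.
have e1 := prod_expand A (@Sy F m) (@Sx F m).
have e2 := prod_expand A (fun s => @Sy F m s + Sx s) (@Sx F m).
rewrite (eq_bigr (fun i => Sy i)) in e2; last by move=> i _; rewrite -addrA two0 // addr0.
rewrite e2 e1 addrC; congr (_ + _); apply: eq_bigr => L _; rewrite mulrC //.
Qed.

Lemma part1 (A : {set 'I_m}) : A != set0 ->
  piQ (\sum_(L : {set 'I_m} | (L != set0) && (L \proper A))
        Qxpow (A :\: L) * QTr L : Q F m) = 0.
Proof.
move=> A0.
rewrite piQ_sum.
under eq_bigr => L _ do rewrite piQM piQxpow piQTr //.
have := full_sum A.
rewrite (bigD1 A) //= (bigD1 set0) /=; last by rewrite sub0set eq_sym.
rewrite tr0 mulr0 add0r setDv /Sxpow big_set0 mul1r.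
rewrite -[X in _ = X]addr0 => /addrI H; apply: etrans H.
apply: eq_bigl => L; rewrite properEneq.
by case: (L == A); case: (L == set0); case: (L \subset A).
Qed.
End S4.

Section S5.
Variables (m : nat).

Definition mono (A X : {set 'I_m}) : 'X_{1..m + m} :=
  (\sum_(s in A :\: X) U_(yv s) + \sum_(s in X) U_(xv s))%MM.

Lemma sum_eq1 (X : {set 'I_m}) s :
  (\sum_(t in X) ((t == s) : nat) = (s \in X))%N.
Proof.
case sX: (s \in X).
  rewrite (bigD1 s) //= eqxx big1 // => t /andP [_ /negbTE ->] //.
by rewrite big1 // => t tX; apply/eqP; rewrite eqb0; apply: contraFN sX => /eqP <-.
Qed.

Lemma mono_x (A X : {set 'I_m}) s : mono A X (xv s) = (s \in X).
Proof.
rewrite /mono mnmDE !mnm_sumE.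
rewrite big1 ?add0n; last by move=> t _; rewrite mnm1E /yv /xv eq_rlshift.
by rewrite -(sum_eq1 X s); apply: eq_bigr => t _; rewrite mnm1E /xv eq_lshift.
Qed.

Lemma mono_y (A X : {set 'I_m}) s : mono A X (yv s) = (s \in A :\: X).
Proof.
rewrite /mono mnmDE !mnm_sumE.
rewrite [X in (_ + X)%N]big1 ?addn0; last by move=> t _; rewrite mnm1E /yv /xv eq_lrshift.
by rewrite -(sum_eq1 (A :\: X) s); apply: eq_bigr => t _; rewrite mnm1E /yv eq_rshift.
Qed.

Lemma monoS_inj (A X X' : {set 'I_m}) : mono A X = mono A X' -> X = X'.
Proof.
move=> h; apply/setP => s; have := mono_x A X s; rewrite h mono_x.
by case: (s \in X); case: (s \in X').
Qed.

Lemma mdeg_mono (A X : {set 'I_m}) : X \subset A -> mdeg (mono A X) = #|A|.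
Proof.
move=> XA; rewrite /mono mdegD !mdeg_sum.
under eq_bigr do rewrite mdeg1. under [X in (_ + X)%N]eq_bigr do rewrite mdeg1.
rewrite !sum1_card -(cardsID X A) addnC; congr (_ + _)%N.
by rewrite (setIidPr XA).
Qed.

Lemma Svar_cases (k : Svar m) : exists s : 'I_m, k = xv s \/ k = yv s.
Proof.
rewrite -(splitK k); case: (split k) => s; exists s; [left|right]; reflexivity.
Qed.

Lemma vrank_x (s : 'I_m) : vrank (xv s) = (2 * s).+1.
Proof. by rewrite /vrank /xv splitL. Qed.
Lemma vrank_y (s : 'I_m) : vrank (yv s) = (2 * s)%N.
Proof. by rewrite /vrank /yv splitR. Qed.

Lemma vrank_inj : injective (@vrank m).
Proof.
move=> k1 k2; case: (Svar_cases k1) => s1 [] ->; case: (Svar_cases k2) => s2 [] ->;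
  rewrite ?vrank_x ?vrank_y => h.
- by have /eqP := h; rewrite eqSS eqn_mul2l /= => /eqP /val_inj ->.
- by exfalso; have := congr1 odd h; rewrite /= !oddM.
- by exfalso; have := congr1 odd h; rewrite /= !oddM.
- by have /eqP := h; rewrite eqn_mul2l /= => /eqP /val_inj ->.
Qed.

Lemma grevlex_asym (a b : 'X_{1..m + m}) : grevlex_lt a b -> grevlex_lt b a -> False.
Proof.
rewrite /grevlex_lt => /orP [h1|/andP [/eqP d1 /existsP [k /andP [k1 /forallP k2]]]]
                      /orP [h3|/andP [/eqP d2 /existsP [k' /andP [k1' /forallP k2']]]].
- by have := ltn_trans h1 h3; rewrite ltnn.
- by move: h1; rewrite d2 ltnn.
- by move: h3; rewrite d1 ltnn.
have [lt|gt|eq] := ltngtP (vrank k) (vrank k').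
- by have := k2 k'; rewrite lt /= => /eqP e; move: k1'; rewrite e ltnn.
- by have := k2' k; rewrite gt /= => /eqP e; move: k1; rewrite e ltnn.
- by move: k1'; rewrite -(vrank_inj eq) => h; have := ltn_trans h k1; rewrite ltnn.
Qed.

Lemma grevlex_lt0 (M : 'X_{1..m + m}) : (0 < mdeg M)%N -> grevlex_lt 0 M.
Proof. by move=> h; rewrite /grevlex_lt mdeg0 h. Qed.

End S5.

Section S6.
Variables (F : fieldType) (m : nat).
Local Notation mn := ('X_{1..m + m}).
Local Notation fmax := (fun a b : mn => if grevlex_lt b a then a else b).

Lemma foldr_in (s : seq mn) z : foldr fmax z s \in z :: s.
Proof.
elim: s => [|a s IH] /=; first by rewrite inE.
case: ifP => _; first by rewrite !inE eqxx orbT.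
move: IH; rewrite !inE => /orP [->//|->]; by rewrite !orbT.
Qed.

Lemma foldr_max (s : seq mn) M z : M \in s -> uniq s ->
  (forall M', M' \in s -> M' != M -> grevlex_lt M' M) -> grevlex_lt z M ->
  foldr fmax z s = M.
Proof.
elim: s => [//|a s IH] Ms /= /andP [as_ us] hs hz.
have hs' : forall M', M' \in s -> M' != M -> grevlex_lt M' M.
  by move=> M' h; apply: hs; rewrite inE h orbT.
case: (eqVneq a M) => [eaM|naM].
  subst a.
  have := foldr_in s z; rewrite inE => /orP [/eqP ->|rs].
    by rewrite hz.
  have rM : foldr fmax z s != M by apply: contraNneq as_ => <-.
  by rewrite (hs' _ rs rM).
move: Ms; rewrite inE eq_sym (negbTE naM) /= => Ms.
rewrite (IH Ms us hs' hz).
case: ifP => // h; exfalso; apply: (grevlex_asym h); apply: hs => //.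
by rewrite inE eqxx.
Qed.

Lemma lead_monoP (p : S F m) M : p@_M != 0 ->
  (forall M', p@_M' != 0 -> M' != M -> grevlex_lt M' M) -> grevlex_lt 0 M ->
  lead_mono p = M.
Proof.
move=> pM h h0; rewrite /lead_mono; apply: foldr_max => //.
- by rewrite mcoeff_msupp.
- by move=> M'; rewrite mcoeff_msupp; apply: h.
Qed.

End S6.

Section S7.
Variables (m : nat).

Lemma mono_lt (A X X' : {set 'I_m}) (t : 'I_m) : X \subset A -> X' \subset A ->
  t \in X -> t \notin X' -> (forall s : 'I_m, (t < s)%N -> (s \in X) = (s \in X')) ->
  grevlex_lt (mono A X) (mono A X').
Proof.
move=> XA XA' tX tX' h.
rewrite /grevlex_lt !mdeg_mono // ltnn eqxx /=.
apply/existsP; exists (xv t); rewrite !mono_x tX (negbTE tX') /=.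
apply/forallP => k; apply/implyP; case: (Svar_cases k) => s [] ->.
  by rewrite !vrank_x ltnS ltn_mul2l /= => ts; rewrite !mono_x h.
rewrite vrank_x vrank_y => ts.
have ts' : (t < s)%N.
  rewrite ltnNge; apply/negP => st; move: ts; rewrite ltnNge; case/negP.
  by apply: leqW; rewrite leq_mul2l st orbT.
by rewrite !mono_y !inE h.
Qed.

Lemma max_symdiff (K K' : {set 'I_m}) : K != K' ->
  exists t : 'I_m, ((t \in K) != (t \in K')) /\
     (forall s : 'I_m, (t < s)%N -> (s \in K) = (s \in K')).
Proof.
move=> nK.
pose D := [set t | (t \in K) != (t \in K')].
have [t0 t0D] : exists t0, t0 \in D.
  apply/set0Pn; apply/negP => /eqP D0; move/negP: nK; apply; apply/eqP/setP => s.
  have : s \notin D by rewrite D0 inE.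
  by rewrite inE negbK => /eqP.
case: (@arg_maxnP _ t0 (mem D) (fun t => nat_of_ord t) t0D) => t tD tmax.
have tD' : t \in D := tD.
exists t; split; first by move: tD'; rewrite inE.
move=> s ts; apply/eqP; rewrite -[_ == _]negbK; apply/negP => hs.
have sD : s \in D by rewrite inE hs.
by have := tmax s sD; rewrite /= leqNgt ts.
Qed.

End S7.

Section S8.
Variables (F : fieldType) (m : nat).
Hypothesis ch2 : (2 \in [pchar F])%N.

Lemma Xmono (A X : {set 'I_m}) :
  'X_[mono A X] = \prod_(s in A :\: X) Sy s * \prod_(s in X) Sx s :> S F m.
Proof.
rewrite /mono mpolyXD.
by rewrite !(big_morph (@mpolyX (m + m) F) (@mpolyXD _ _) (@mpolyX0 _ _)).
Qed.

Lemma trE (L : {set 'I_m}) : tr L =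
  \sum_(K : {set 'I_m} | K \proper L) \prod_(s in K) Sy s * \prod_(s in L :\: K) Sx s
  :> S F m.
Proof.
rewrite /tr prod_expand (bigD1 L) //= setDv big_set0 mulr1 addrA two0 // add0r.
by apply: eq_bigl => K; rewrite properEneq andbC.
Qed.

Lemma termE (A L : {set 'I_m}) : L \subset A ->
  Sxpow (A :\: L) * tr L =
  \sum_(K : {set 'I_m} | K \proper L) 'X_[mono A (A :\: K)] :> S F m.
Proof.
move=> LA; rewrite trE mulr_sumr; apply: eq_bigr => K KL.
have KL' := proper_sub KL.
rewrite Xmono.
have e1 : A :\: (A :\: K) = K.
  apply/setP => s; rewrite !inE; have := subsetP KL' s; have := subsetP LA s.
  move: (subsetP LA s) (subsetP KL' s) => /implyP h1 /implyP h2; move: h1 h2.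
  by case: (s \in K); case: (s \in L); case: (s \in A).
have e2 : (A :\: K) :&: L = L :\: K.
  apply/setP => s; rewrite !inE.
  move: (subsetP LA s) (subsetP KL' s) => /implyP h1 /implyP h2; move: h1 h2.
  by case: (s \in K); case: (s \in L); case: (s \in A).
have e3 : (A :\: K) :\: L = A :\: L.
  apply/setP => s; rewrite !inE.
  move: (subsetP LA s) (subsetP KL' s) => /implyP h1 /implyP h2; move: h1 h2.
  by case: (s \in K); case: (s \in L); case: (s \in A).
rewrite e1 [\prod_(s in A :\: K) _](big_setID L) /= e2 e3 /Sxpow.
by rewrite mulrCA [X in _ * X]mulrC.
Qed.

End S8.

Section S9.
Variables (F : fieldType) (m : nat).
Hypothesis ch2 : (2 \in [pchar F])%N.
Variables (A L : {set 'I_m}) (l : 'I_m).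
Hypothesis A3 : (3 <= #|A|)%N.
Hypothesis LA : L \proper A.
Hypothesis lL : l \in L.
Hypothesis lmin : forall k, k \in L -> (l <= k)%N.

Let LA' : L \subset A := proper_sub LA.
Let lA : l \in A := subsetP LA' l lL.
Let K0 := L :\ l.
Let M0 := mono A (A :\: K0).

Let p : S F m := \sum_(K : {set 'I_m} | K \proper L) 'X_[mono A (A :\: K)].

Lemma pE : piQ (Qxpow (A :\: L) * QTr L : Q F m) = p.
Proof. by rewrite piQM piQxpow piQTr // termE. Qed.

Lemma pcoef M : p@_M = \sum_(K : {set 'I_m} | K \proper L) ((mono A (A :\: K) == M)%:R).
Proof. by rewrite /p raddf_sum; apply: eq_bigr => K _; apply: mcoeffX. Qed.

Lemma setD_inj (K K' : {set 'I_m}) : K \subset A -> K' \subset A ->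
  A :\: K = A :\: K' -> K = K'.
Proof.
move=> KA K'A e; apply/setP => s; have := congr1 (fun X : {set 'I_m} => s \in X) e; rewrite /= !inE.
move: (subsetP KA s) (subsetP K'A s) => /implyP h1 /implyP h2; move: h1 h2.
by case: (s \in K); case: (s \in K'); case: (s \in A).
Qed.

Lemma K0L : K0 \proper L. Proof. exact: properD1. Qed.

Lemma pcoefM0 : p@_M0 = 1.
Proof.
rewrite pcoef (bigD1 K0) ?K0L //= eqxx big1 ?addr0 //.
move=> K /andP [KL nK]; case: eqP => // /monoS_inj /setD_inj e.
exfalso; move/negP: nK; apply; apply/eqP; apply: e.
- exact: subset_trans (proper_sub KL) LA'.
- exact: subset_trans (proper_sub K0L) LA'.
Qed.

Lemma domK0 (K : {set 'I_m}) : K \proper L -> K != K0 ->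
  grevlex_lt (mono A (A :\: K)) M0.
Proof.
move=> KL nK; have KL' := proper_sub KL.
have [t [tK tmax]] := max_symdiff nK.
have KtK0 : t \notin K.
  apply/negP => tK'; move: tK; rewrite tK' /= /K0 !inE negb_and negbK.
  have tL := subsetP KL' t tK'.
  rewrite tL orbF => /eqP tl.
  move: KL; rewrite properEneq => /andP [/negP KnL _]; apply: KnL.
  apply/eqP/setP => s; apply/idP/idP => [/(subsetP KL')//|sL].
  case: (eqVneq s l) => [->|nsl]; first by rewrite -tl.
  rewrite (tmax s); first by rewrite /K0 !inE nsl sL.
  by rewrite tl ltn_neqAle lmin // andbT; apply: contra nsl => /eqP h; apply/eqP/val_inj.
have tK0 : t \in K0 by move: tK; rewrite (negbTE KtK0); case: (t \in K0).
have tA : t \in A by apply: (subsetP LA' _ (subsetP (proper_sub K0L) _ tK0)).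
apply: (mono_lt (t := t)); rewrite ?subsetDl //.
- by rewrite !inE tA KtK0.
- by rewrite !inE; move: tK0; rewrite /K0 !inE => ->.
- by move=> s ts; have := tmax s ts; rewrite /K0 !inE => ->.
Qed.

Lemma mdegM0 : mdeg M0 = #|A|.
Proof. by rewrite mdeg_mono // subsetDl. Qed.

Lemma lead_monoE : lead_mono p = M0.
Proof.
apply: lead_monoP; first by rewrite pcoefM0 oner_neq0.
- move=> M' hM' nM'; move: hM'; rewrite pcoef.
  case: (boolP [exists K : {set 'I_m}, (K \proper L) && (mono A (A :\: K) == M')]).
    case/existsP => K /andP [KL /eqP eM] _; subst M'.
    by apply: domK0 => //; apply/eqP => eK; move/eqP: nM'; apply; rewrite eK.
  move=> /negP nex; rewrite big1 ?eqxx //.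
  move=> K KL; case: eqP => // e; exfalso; apply: nex; apply/existsP; exists K.
  by rewrite KL e eqxx.
- by apply: grevlex_lt0; rewrite mdegM0; apply: leq_trans A3.
Qed.

Lemma lead_termE : lead_term p = 'X_[M0].
Proof. by rewrite /lead_term lead_monoE pcoefM0 scale1r. Qed.

End S9.

Lemma Xinj (F : fieldType) n (a b : 'X_{1..n}) :
  'X_[a] = 'X_[b] :> {mpoly F[n]} -> a = b.
Proof.
move=> h; have := congr1 (mcoeff a) h; rewrite !mcoeffX eqxx.
by case: eqP => // _ /eqP; rewrite oner_eq0.
Qed.

Section S10.
Variables (m : nat) (A : {set 'I_m}) (i j : 'I_m).
Hypothesis hi : is_ell A i.
Hypothesis hj : is_ell (A :\ i) j.

Lemma iA : i \in A. Proof. by case/andP: hi. Qed.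
Lemma imin k : k \in A -> (i <= k)%N.
Proof. by case/andP: hi => _ /forall_inP; apply. Qed.
Lemma jA : j \in A. Proof. by case/andP: hj; rewrite !inE => /andP []. Qed.
Lemma jni : j != i. Proof. by case/andP: hj; rewrite !inE => /andP []. Qed.
Lemma jmin k : k \in A -> k != i -> (j <= k)%N.
Proof. by move=> kA ki; case/andP: hj => _ /forall_inP; apply; rewrite !inE ki kA. Qed.

Lemma xxyE : xxy i j ((A :\ i) :\ j) = mono A [set i; j].
Proof.
apply/mnmP => k; case: (Svar_cases k) => s [] ->.
  rewrite mono_x /xxy !mnmDE mnm_sumE !mnm1E /xv !eq_lshift.
  rewrite big1 ?addn0; last by move=> t _; rewrite mnm1E /yv eq_rlshift.
  rewrite !inE; case: (eqVneq i s) => [<-|nis]; first by rewrite (negbTE jni).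
  by rewrite add0n eq_sym.
rewrite mono_y /xxy !mnmDE mnm_sumE !mnm1E /xv /yv !eq_lrshift /=.
rewrite (eq_bigr (fun t => nat_of_bool (t == s))); last by move=> t _; rewrite mnm1E eq_rshift.
by rewrite sum_eq1 !inE; case: (s == i); case: (s == j).
Qed.

Lemma ijA : [set i; j] \subset A.
Proof. by apply/subsetP => s; rewrite !inE => /orP [] /eqP ->; [exact: iA|exact: jA]. Qed.

Lemma le_ij (X : {set 'I_m}) : X \subset A -> (1 < #|X|)%N ->
  grevlex_le (mono A X) (mono A [set i; j]).
Proof.
move=> XA X2.
case: (eqVneq X [set i; j]) => [->|nX]; first by rewrite /grevlex_le eqxx.
apply/orP; right.
have [t [tne tmax]] := max_symdiff nX.
case tX: (t \in X).
  apply: (mono_lt (t := t)) => //; first exact: ijA.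
  by move: tne; rewrite tX; case: (t \in [set i; j]).
have tij : t \in [set i; j] by move: tne; rewrite tX; case: (t \in [set i; j]).
exfalso; move/negP: nX; apply.
rewrite eqEcard cards2 eq_sym jni X2 andbT.
apply/subsetP => s sX; apply/negPn/negP => sij.
have sA := subsetP XA s sX.
have si : s != i by apply: contra sij => /eqP ->; rewrite !inE eqxx.
have sj : s != j by apply: contra sij => /eqP ->; rewrite !inE eqxx orbT.
have js : (j < s)%N.
  by rewrite ltn_neqAle jmin // andbT; apply: contra sj => /eqP h; apply/eqP/val_inj.
have ts : (t < s)%N.
  move: tij; rewrite !inE => /orP [] /eqP ->; last by [].
  by apply: leq_ltn_trans js; apply: imin; exact: jA.
by move: (tmax s ts); rewrite sX (negbTE sij).
Qed.

End S10.

Lemma memX m (A L : {set 'I_m}) (l : 'I_m) s : l \in A ->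
  (s \in A :\: (L :\ l)) = (s \in A :\: L) || (s == l).
Proof.
move=> lA; rewrite !inE; case: (eqVneq s l) => [->|_]; first by rewrite lA orbT.
by rewrite /= orbF.
Qed.

Unset Implicit Arguments.

Theorem mainTheorem2 (F : fieldType) (m : nat) (A : {set 'I_m}) :
  (2 \in [pchar F])%N -> (1 <= m)%N -> (3 <= #|A|)%N ->
  piQ (F:=F) (\sum_(L : {set 'I_m} | (L != set0) && (L \proper A))
        Qxpow (A :\: L) * QTr L) = 0
  /\
  (forall i j : 'I_m, is_ell A i -> is_ell (A :\ i) j ->
   forall L : {set 'I_m}, L != set0 -> L \proper A ->
     grevlex_le (lead_mono (piQ (F:=F) (Qxpow (A :\: L) * QTr L)))
                (xxy i j ((A :\ i) :\ j))
     /\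
     (lead_term (piQ (F:=F) (Qxpow (A :\: L) * QTr L)) = 'X_[xxy i j ((A :\ i) :\ j)]
      <-> (A :\: L = [set i] \/ A :\: L = [set j]))).
Proof.
move=> ch2 _ A3; split.
  apply: part1 => //; apply/set0Pn.
  by have /card_gt0P : (0 < #|A|)%N by apply: leq_trans A3.
move=> i j hi hj L L0 LA.
have [l0 l0L] := set0Pn L L0.
case: (@arg_minnP _ l0 (mem L) (fun t => nat_of_ord t) l0L) => l lL' lmin'.
have lL : l \in L := lL'.
have lmin : forall k, k \in L -> (l <= k)%N by move=> k kL; apply: lmin'.
have LA' := proper_sub LA.
have lA := subsetP LA' l lL.
rewrite (pE ch2 LA) (xxyE hj); split.
  rewrite (lead_monoE F A3 LA lL lmin); apply: le_ij => //; first exact: subsetDl.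
  apply/card_gt1P.
  have [_ [a aA aL]] := properP LA.
  exists l, a; rewrite !inE lA aA eqxx /= (negbTE aL) andbF; split => //.

  by apply: contraNneq aL => <-.
rewrite (lead_termE F A3 LA lL lmin).
have iA' := iA hi; have jA' := jA hj; have ji := jni hj.
have ij : (i == j) = false by rewrite eq_sym (negbTE ji).
split.
  move=> /Xinj /monoS_inj H.
  have Hs s : (s \in A :\: L) || (s == l) = (s == i) || (s == j).
    by rewrite -memX // H !inE.
  have iL : l = i -> A :\: L = [set j].
    move=> li; have iL : i \in L by rewrite -li.
    apply/setP => s; have := Hs s; rewrite in_set1 li.
    case: (eqVneq s i) => [->|nsi]; first by rewrite ?ij ?(negbTE ji) !inE iL.
    by rewrite orbF.
  have jL : l = j -> A :\: L = [set i].
    move=> lj; have jL : j \in L by rewrite -lj.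
    apply/setP => s; have := Hs s; rewrite in_set1 lj.
    case: (eqVneq s j) => [->|nsj]; first by rewrite ?ij ?(negbTE ji) !inE jL.
    by rewrite !orbF.
  have := Hs l; rewrite eqxx orbT => /esym /orP [] /eqP el.
    by right; apply: iL.
  by left; apply: jL.
move=> H; congr ('X_[mono A _]).
case: H => H.
  have lj : l = j.
    have li : l != i by apply: contraTneq lL => ->; move: (set11 i); rewrite -H inE => /andP [].
    have jL : j \in L.
      apply/negPn/negP => jL; have : j \in A :\: L by rewrite inE jL jA'.
      by rewrite H inE (negbTE ji).
    apply/val_inj/eqP; rewrite eqn_leq lmin // (jmin hj) //.
  apply/setP => s; rewrite memX // H lj !inE //.
have li : l = i.
  have iL : i \in L.
    apply/negPn/negP => iL; have : i \in A :\: L by rewrite inE iL iA'.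
    by rewrite H inE eq_sym (negbTE ji).
  apply/val_inj/eqP; rewrite eqn_leq lmin // (imin hi) //.
apply/setP => s; rewrite memX // H li !inE orbC //.
Qed.
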